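(* Assume $\mathbf{P.0}$ has an optimal solution, with optimal value $OPT$. Then $\mathbf{P.2}$ has a feasible solution, and an optimal solution $A^{P2}$ of $\mathbf{P.2}$ satisfies $f(A^{P2})\ge (1-1/e)^2\, OPT$. In particular, there exists a set $A\subseteq V$ with $|A|\le b$, $\lfloor\alpha_t\rfloor\le|A\cap V_t|\le\lceil\beta_t\rceil$ for all $t\in[m]$, and $f(A)\ge(1-1/e)^2\,OPT$.
   Context: Let $V$ be a finite set of $n$ items and $f:2^V\to\mathbb{R}_{\ge 0}$ a non-negative monotone submodular function. Items are divided into pairwise disjoint groups $V_1,\dots,V_m$ with $V=V_1\cup\dots\cup V_m$; $\alpha,\beta\in\mathbb{R}_{\ge 0}^m$ and $b$ is a positive integer. Let $\mathcal{F}=\{S\subseteq V: |S|\le b\}$. Problem $\mathbf{P.0}$: maximize $\sum_{S\in\mathcal{F}} x_S f(S)$ over $x\in[0,1]^{\mathcal{F}}$ subject to $\alpha_t\le \sum_{S\in\mathcal{F}} x_S |S\cap V_t|\le \beta_t$ for all $t\in[m]$ and $\sum_{S\in\mathcal{F}}x_S\le 1$; $OPT$ denotes its optimal value. Problem $\mathbf{P.2}$: maximize $f(S)$ over $S\in\mathcal{F}$ subject to $\lfloor\alpha_t\rfloor\le|S\cap V_t|\le\lceil\beta_t\rceil$ for all $t\in[m]$. *)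

(* Defs.v *)
From mathcomp Require Import all_boot all_order all_algebra.
From mathcomp Require Import all_classical all_reals all_analysis.
Set Implicit Arguments. Unset Strict Implicit. Unset Printing Implicit Defensive.
Import Order.TTheory GRing.Theory Num.Theory.
Local Open Scope ring_scope.

Section Defs.
Variables (R : realType) (V : finType) (m : nat).

Definition nonneg_fun (f : {set V} -> R) := forall S, 0 <= f S.
Definition monotone_fun (f : {set V} -> R) :=
  forall S T : {set V}, S \subset T -> f S <= f T.
Definition submodular_fun (f : {set V} -> R) :=
  forall S T : {set V}, f (S :|: T) + f (S :&: T) <= f S + f T.

(* the groups: V_t = [set v | grp v == t]; pairwise disjoint, covering V *)
Definition group_of (grp : V -> 'I_m) (t : 'I_m) : {set V} := [set v | grp v == t].

(* P.0 : variables x_S for S in F = {S : |S| <= b}; x is given on all of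
   {set V} but only its values on F matter *)
Definition P0_feasible (grp : V -> 'I_m) (alpha beta : 'I_m -> R) (b : nat)
  (x : {set V} -> R) :=
  [/\ forall S : {set V}, (#|S| <= b)%N -> 0 <= x S <= 1,
      forall t : 'I_m,
        alpha t <= \sum_(S : {set V} | (#|S| <= b)%N) x S * (#|S :&: group_of grp t|)%:R
        <= beta t
    & \sum_(S : {set V} | (#|S| <= b)%N) x S <= 1].

Definition P0_obj (f : {set V} -> R) (b : nat) (x : {set V} -> R) :=
  \sum_(S : {set V} | (#|S| <= b)%N) x S * f S.

Definition P0_optimal_value (f : {set V} -> R) grp alpha beta b (OPT : R) :=
  (exists x, P0_feasible grp alpha beta b x /\ P0_obj f b x = OPT) /\
  (forall y, P0_feasible grp alpha beta b y -> P0_obj f b y <= OPT).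

Definition P2_feasible (grp : V -> 'I_m) (alpha beta : 'I_m -> R) (b : nat)
  (S : {set V}) :=
  (#|S| <= b)%N /\
  forall t : 'I_m,
    (Num.floor (alpha t) <= (#|S :&: group_of grp t|)%:Z)%R /\
    ((#|S :&: group_of grp t|)%:Z <= Num.ceil (beta t))%R.

Definition P2_optimal (f : {set V} -> R) grp alpha beta b (A : {set V}) :=
  P2_feasible grp alpha beta b A /\
  forall S, P2_feasible grp alpha beta b S -> f S <= f A.

End Defs.

(* Main.v *)
Require Import Defs.
From mathcomp Require Import all_boot all_order all_algebra.
From mathcomp Require Import all_classical all_reals all_analysis.
Import Order.TTheory GRing.Theory Num.Theory.
Local Open Scope ring_scope.
From mathcomp Require Import ring lra zify.

Lemma const_bound (R : realType) : 0 <= 1 - (expR (1:R))^-1 /\ 2 * (1 - (expR (1:R))^-1) ^+ 2 <= 1.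
Proof.
have h1 : 1 + (- (1/3)) <= expR (- (1/3) : R) := expR_ge1Dx _.
have e3 : expR (-1 : R) = expR (- (1/3)) ^+ 3.
  by rewrite -expRM_natr; congr expR; field.
have hp : 0 <= 1 + (- (1/3) : R) by lra.
have h3 : (1 + (- (1/3)))^+3 <= expR (- (1/3) : R) ^+ 3 by rewrite lerXn2r// ?nnegrE ?expR_ge0.
rewrite -expRN e3.
have hle : expR (- (1/3) : R) ^+ 3 <= 1.
  by rewrite -e3 expR_le1; lra.
set z := expR _ ^+ 3 in h3 hle *.
have : 8/27 <= z by move: h3; rewrite !exprS expr0; lra.
move=> hz; split; first lra.
nra.
Qed.

Set Implicit Arguments. Unset Strict Implicit. Unset Printing Implicit Defensive.

Section Helpers.
Variables (R : realType) (V : finType) (m : nat) (f : {set V} -> R) (grp : V -> 'I_m).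
Hypotheses (f0 : nonneg_fun f) (fmon : monotone_fun f) (fsub : submodular_fun f).

Lemma DR (X Y : {set V}) v : Y \subset X -> f (v |: X) - f X <= f (v |: Y) - f Y.
Proof.
move=> sYX; case vX: (v \in X).
  have -> : v |: X = X by apply/finset.setUidPr; rewrite finset.sub1set.
  have := fmon (finset.subsetUr [set v] Y); lra.
have := fsub (v |: Y) X.
have -> : (v |: Y) :|: X = v |: X.
  apply/finset.setP => z; rewrite !inE; have := fintype.subsetP sYX z.
  by case: (z == v); case: (z \in Y); case: (z \in X) => // ->.
have -> : (v |: Y) :&: X = Y.
  apply/finset.setP => z; rewrite !inE; have := fintype.subsetP sYX z.
  case: eqP => [->|_]; last by case: (z \in Y); case: (z \in X) => // ->.
  by rewrite vX andbF; case: (v \in Y) => // ->.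
lra.
Qed.

Lemma S1 (A S : {set V}) : f (A :|: S) <= f A + \sum_(v in S) (f (v |: A) - f A).
Proof.
elim: {S}#|S| {-2}S (erefl #|S|) => [|n IH] S hS.
  by rewrite (cards0_eq hS) big_set0 finset.setU0 addr0.
case: (set_0Vmem S) => [S0|[v vS]]; first by rewrite S0 cards0 in hS.
rewrite (big_setD1 v vS) /=.
have hS' : #|S :\ v| = n by move: hS; rewrite (cardsD1 v S) vS add1n => -[].
have := IH _ hS'.
have -> : A :|: S = v |: (A :|: S :\ v).
  apply/finset.setP => z; rewrite !inE; case: eqP => [->|_]; first by rewrite vS orbT.
  by [].
have := DR v (finset.subsetUl A (S :\ v)).
lra.
Qed.

Lemma S2 (A : {set V}) : \sum_(a in A) (f A - f (A :\ a)) <= f A - f finset.set0.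
Proof.
elim: {A}#|A| {-2}A (erefl #|A|) => [|n IH] A hA.
  by rewrite (cards0_eq hA) big_set0 subrr.
case: (set_0Vmem A) => [A0|[a aA]]; first by rewrite A0 cards0 in hA.
rewrite (big_setD1 a aA) /=.
have hA' : #|A :\ a| = n by move: hA; rewrite (cardsD1 a A) aA add1n => -[].
have := IH _ hA'.
have : \sum_(i in A :\ a) (f A - f (A :\ i)) <= \sum_(i in A :\ a) (f (A :\ a) - f (A :\ a :\ i)).
  apply: ler_sum => c; rewrite inE => /andP[ca cA].
  have e1 : c |: (A :\ c) = A by rewrite finset.setD1K.
  have e2 : c |: (A :\ a :\ c) = A :\ a by rewrite finset.setD1K // inE ca.
  have := @DR (A :\ c) (A :\ a :\ c) c.
  rewrite e1 e2; apply.
  by apply/fintype.subsetP => z; rewrite !inE => /and3P[-> _ ->].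
lra.
Qed.

Definition cnt (X : {set V}) t := #|X :&: group_of grp t|.

Lemma cntE (X : {set V}) t : cnt X t = (\sum_(z in X) (grp z == t))%N.
Proof.
rewrite /cnt -sum1_card big_mkcond [RHS]big_mkcond /=; apply: eq_bigr => z _.
by rewrite !inE; case: (z \in X); case: (grp z == t).
Qed.

Lemma cnt_U1 (X : {set V}) v t : v \notin X -> cnt (v |: X) t = ((grp v == t) + cnt X t)%N.
Proof. by move=> vX; rewrite !cntE big_setU1. Qed.

Lemma cnt_D1 (X : {set V}) a t : a \in X -> cnt X t = ((grp a == t) + cnt (X :\ a) t)%N.
Proof. by move=> aX; rewrite !cntE (big_setD1 a aX). Qed.

Lemma card_cnt (X : {set V}) : #|X| = (\sum_t cnt X t)%N.
Proof.
under eq_bigr do rewrite cntE.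
rewrite exchange_big /= -sum1_card; apply: eq_bigr => z _.
by rewrite (bigD1 (grp z)) //= eqxx big1 // => t /negbTE; rewrite eq_sym => ->.
Qed.

Lemma cntR (X : {set V}) t (c : R) : c * (cnt X t)%:R = \sum_(z | (z \in X) && (grp z == t)) c.
Proof.
rewrite cntE natr_sum mulr_sumr big_mkcondr /=; apply: eq_bigr => z _.
by case: (grp z == t); rewrite ?mulr1 ?mulr0.
Qed.

Lemma cntR' (X : {set V}) t : (cnt X t)%:R = \sum_(z | grp z == t) (z \in X)%:R :> R.
Proof.
rewrite cntE natr_sum big_mkcond [RHS]big_mkcond /=; apply: eq_bigr => z _.
by case: (grp z == t); case: (z \in X).
Qed.

Lemma part_sum (P : pred V) (F : V -> R) :
  \sum_(v | P v) F v = \sum_t \sum_(v | P v && (grp v == t)) F v.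
Proof. exact: (partition_big grp xpredT). Qed.

End Helpers.

Lemma group_ineq (R : realType) (C D Y W mu K n : R) (full good : bool) :
 0 <= mu -> 0 <= Y -> 0 <= W -> 0 <= D -> 0 <= K -> (n = 0 \/ 1 <= n) ->
 C * n <= Y * D -> (~~ full -> C <= Y * mu) -> (good -> 1 <= n /\ n * mu <= D) ->
 (full -> Y + W <= n) -> (~~ good -> n <= Y + W) -> C <= Y * K ->
 C <= D + mu * (Y + W - n).
Proof.
move=> hmu hY hW hD hK hn h1 h2 h3 h4 h5 h6.
case: full h2 h4 => [_ /(_ isT) h4|/(_ isT) h2 _]; case: good h3 h5 => [/(_ isT) [hn1 h3] _|_ /(_ isT) h5].
-
  have hYn : Y <= n by lra.
  have : C * n <= (D + mu * (Y + W - n)) * n.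
    apply: (le_trans h1). nra.
  move=> h; rewrite -(ler_pM2r (_ : 0 < n)) //; lra.
-
  have e : Y + W = n by lra.
  rewrite e subrr mulr0 addr0.
  case: hn => [n0|hn1].
    have Y0 : Y = 0 by lra.
    by move: h6; rewrite Y0 mul0r => h; lra.
  have : C * n <= D * n by apply: (le_trans h1); nra.
  move=> h; rewrite -(ler_pM2r (_ : 0 < n)) //; lra.
-
  case: (lerP n Y) => hYn.
    have := mulr_ge0 hW hmu.
    have -> : mu * (Y + W - n) = Y * mu + W * mu - n * mu by ring.
    lra.
  have : C * n <= (D + mu * (Y + W - n)) * n.
    apply: (le_trans h1).
    have p1 : 0 <= (n - Y) * (D - n * mu) by apply: mulr_ge0; lra.
    have p2 : 0 <= n * (W * mu) by apply: mulr_ge0; [lra|apply: mulr_ge0].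
    have -> : (D + mu * (Y + W - n)) * n = Y * D + (n - Y) * (D - n * mu) + n * (W * mu) by ring.
    lra.
  move=> h; rewrite -(ler_pM2r (_ : 0 < n)) //; lra.
-
  case: hn => [n0|hn1].
    move: h2 h5; rewrite n0 => h2 h5; nra.
  case: (lerP Y n) => hYn.
    have : C * n <= D * n by apply: (le_trans h1); nra.
    move=> h; have : C <= D by rewrite -(ler_pM2r (_ : 0 < n)) //; lra.
    nra.
  case: (lerP (D / n) mu) => hdm.
    have hD' : D = (D / n) * n by rewrite divfK //; lra.
    have : C * n <= (D + (D/n) * (Y - n)) * n.
      apply: (le_trans h1). rewrite {1}hD'. nra.
    move=> h; have : C <= D + (D/n) * (Y - n) by rewrite -(ler_pM2r (_ : 0 < n)) //; lra.
    nra.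
  have : n * mu <= D.
    by move: hdm; rewrite ltr_pdivlMr; lra.
  nra.
Qed.

Section Main.
Variables (R : realType) (V : finType) (m : nat) (f : {set V} -> R) (grp : V -> 'I_m).
Hypotheses (f0 : nonneg_fun f) (fmon : monotone_fun f) (fsub : submodular_fun f).
Variables (alpha beta : 'I_m -> R) (b : nat).
Hypotheses (alpha0 : forall t, 0 <= alpha t).

Lemma natrZ n : ((n%:Z)%:~R : R) = n%:R.
Proof. by rewrite -pmulrn. Qed.

Lemma feas_gen (A A' : {set V}) : P2_feasible grp alpha beta b A ->
  (#|A'| <= #|A|)%N ->
  (forall r, (Num.floor (alpha r) <= (cnt grp A' r)%:Z) /\ ((cnt grp A' r)%:Z <= Num.ceil (beta r))) ->
  P2_feasible grp alpha beta b A'.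
Proof. move=> [hAb _] h1 h2; split => //; exact: leq_trans h1 hAb. Qed.

Lemma feas_swap (A : {set V}) a v : P2_feasible grp alpha beta b A ->
  a \in A -> v \notin A ->
  (grp v == grp a) || ((cnt grp A (grp v))%:Z != Num.ceil (beta (grp v))) &&
                       (Num.floor (alpha (grp a)) < (cnt grp A (grp a))%:Z) ->
  P2_feasible grp alpha beta b (v |: (A :\ a)).
Proof.
move=> hA aA vA H; apply: (feas_gen hA).
  have vA' : v \notin A :\ a by rewrite inE negb_and vA orbT.
  by rewrite cardsU1 vA' (cardsD1 a A) aA.
move=> r; have vA' : v \notin A :\ a by rewrite inE negb_and vA orbT.
have e1 := cnt_U1 grp r vA'; have e2 := cnt_D1 grp r aA.
have [hl hu] := hA.2 r; rewrite -/(cnt grp A r) in hl hu.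
rewrite e1; move: hl hu H; rewrite e2.
case ev: (grp v == r); case ea: (grp a == r) => /=.
- by rewrite add1n.
- rewrite (eqP ev) eq_sym ea /= => hl hu /andP[hne _].
  move: hne; rewrite e2 ea => hne; lia.
- rewrite (eqP ea) ev /= => hl hu /andP[_ hg].
  move: hg; rewrite e2 /= => hg; lia.
- by [].
Qed.

Lemma feas_add (A : {set V}) v : P2_feasible grp alpha beta b A -> v \notin A ->
  (#|A| < b)%N -> (cnt grp A (grp v))%:Z != Num.ceil (beta (grp v)) ->
  P2_feasible grp alpha beta b (v |: A).
Proof.
move=> hA vA hb H; split; first by rewrite cardsU1 vA.
move=> r; have e1 := cnt_U1 grp r vA.
have [hl hu] := hA.2 r; rewrite -/(cnt grp A r) in hl hu.
rewrite -/(cnt grp (v |: A) r) e1.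
case ev: (grp v == r) => /=; last by [].
move: H; rewrite (eqP ev) => H; lia.
Qed.


Lemma main_bound x (A : {set V}) : P0_feasible grp alpha beta b x ->
  P2_optimal f grp alpha beta b A -> P0_obj f b x <= 2 * f A.
Proof.
move=> [hx01 hxt hxs] [hA hopt].
pose y v := \sum_(S : {set V} | (#|S| <= b)%N) x S * (v \in S)%:R.
pose g v := f (v |: A) - f A.
pose d a := f A - f (A :\ a).
have x0 (S : {set V}) : (#|S| <= b)%N -> 0 <= x S by move=> /hx01 /andP[].
have y0 v : 0 <= y v by apply: sumr_ge0 => S /x0 h; apply: mulr_ge0.
have g0 v : 0 <= g v by rewrite subr_ge0; apply: fmon; apply: finset.subsetUr.
have d0 a : 0 <= d a by rewrite subr_ge0; apply: fmon; apply: finset.subsetDl.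
have gA v : v \in A -> g v = 0.
  by move=> vA; rewrite /g (finset.setUidPr _) ?subrr // finset.sub1set.
have ysum t : \sum_(v | grp v == t) y v = \sum_(S : {set V} | (#|S| <= b)%N) x S * (cnt grp S t)%:R.
  by rewrite exchange_big /=; apply: eq_bigr => S _; rewrite cntR' mulr_sumr.
have ytot : \sum_v y v <= b%:R.
  rewrite exchange_big /=.
  apply: (@le_trans _ _ (\sum_(S : {set V} | (#|S| <= b)%N) x S * b%:R)).
    apply: ler_sum => S hS; rewrite -mulr_sumr; apply: ler_wpM2l; first exact: x0.
    have -> : \sum_v (v \in S)%:R = #|S|%:R :> R.
      rewrite -sum1_card natr_sum [RHS]big_mkcond /=; apply: eq_bigr => v _.
      by case: (v \in S).
    by rewrite ler_nat.
  rewrite -mulr_suml; have := ler_wpM2r (ler0n R b) hxs; rewrite mul1r; exact.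
have hOPT : P0_obj f b x <= f A + \sum_v y v * g v.
  rewrite /P0_obj.
  apply: (@le_trans _ _ (\sum_(S : {set V} | (#|S| <= b)%N) x S * (f A + \sum_(v in S) g v))).
    apply: ler_sum => S hS; apply: ler_wpM2l; first exact: x0.
    apply: le_trans (S1 fmon fsub A S); apply: fmon; exact: finset.subsetUr.
  have -> : \sum_(S : {set V} | (#|S| <= b)%N) x S * (f A + \sum_(v in S) g v) =
     (\sum_(S : {set V} | (#|S| <= b)%N) x S) * f A + \sum_v y v * g v.
    under eq_bigr do rewrite mulrDr.
    rewrite big_split /= -mulr_suml; congr (_ + _).
    rewrite /y; under [RHS]eq_bigr do rewrite mulr_suml.
    rewrite exchange_big /=; apply: eq_bigr => S hS.
    rewrite mulr_sumr big_mkcond /=; apply: eq_bigr => v _.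
    by case: (v \in S); rewrite ?mulr1 ?mulr0 ?mul0r.
  have := ler_wpM2r (f0 A) hxs; rewrite mul1r; lra.

suff core : \sum_v y v * g v <= \sum_(a in A) d a.
  have := S2 fmon fsub A; have := f0 finset.set0; rewrite -/d; lra.
pose full t := (cnt grp A t)%:Z == Num.ceil (beta t).
pose good t := Num.floor (alpha t) < (cnt grp A t)%:Z.
have hswap a v : a \in A -> v \notin A ->
    P2_feasible grp alpha beta b (v |: (A :\ a)) -> g v <= d a.
  move=> aA vA hF; have := hopt _ hF.
  have := DR fmon fsub v (finset.subsetDl A [set a]); rewrite /g /d; lra.
have B1 v a : v \notin A -> a \in A -> grp a = grp v -> g v <= d a.
  move=> vA aA e; apply: hswap => //; apply: feas_swap => //; by rewrite e eqxx.
have B2 v a : v \notin A -> ~~ full (grp v) -> a \in A -> good (grp a) -> g v <= d a.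
  move=> vA nf aA ga; apply: hswap => //; apply: feas_swap => //.
  by apply/orP; right; apply/andP; split.
have [mu [mu0 mu2 mu3 mu4]] : exists mu, [/\ 0 <= mu,
    forall a, a \in A -> good (grp a) -> mu <= d a,
    forall v, v \notin A -> ~~ full (grp v) -> g v <= mu &
    mu * (\sum_v y v - #|A|%:R) <= 0].
  have hAb : (#|A| <= b)%N := hA.1.
  case: (eqVneq #|A| b) => [eAb | nAb].
    have hneg : \sum_v y v - #|A|%:R <= 0 by rewrite eAb; lra.
    case: (set_0Vmem [set a in A | good (grp a)]) => [P0 | [a0 Pa0]].
      exists (\sum_v g v); split.
      - by apply: sumr_ge0.
      - move=> a aA ga; have : a \in [set a in A | good (grp a)] by rewrite inE aA.
        by rewrite P0 inE.
      - by move=> v _ _; rewrite (bigD1 v) //= lerDl sumr_ge0.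
      - by apply: mulr_ge0_le0 => //; apply: sumr_ge0.
    have Pa0' : [pred a | a \in [set a in A | good (grp a)]] a0 by [].
    case: (arg_minP d Pa0') => a1 /=; rewrite inE => /andP[a1A ga1] hmin.
    exists (d a1); split => //.
    - by move=> a aA ga; apply: hmin; rewrite /= inE aA.
    - by move=> v vA nf; apply: B2.
    - by apply: mulr_ge0_le0.
  have ltAb : (#|A| < b)%N by rewrite ltn_neqAle nAb.
  exists 0; split => //.
  - by move=> v vA nf; have := hopt _ (feas_add hA vA ltAb nf); rewrite /g; lra.
  - by rewrite mul0r.

pose C t := \sum_(v | (grp v == t) && (v \notin A)) y v * g v.
pose Yq t := \sum_(v | (grp v == t) && (v \notin A)) y v.
pose Wq t := \sum_(v | (grp v == t) && (v \in A)) y v.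
pose D t := \sum_(a | (a \in A) && (grp a == t)) d a.
pose n t := (cnt grp A t)%:R : R.
pose K := \sum_v g v.
have eqC : \sum_v y v * g v = \sum_t C t.
  rewrite (bigID (fun v => v \in A)) /= big1 ?add0r => [|v vA]; last by rewrite gA ?mulr0.
  rewrite (part_sum grp); apply: eq_bigr => t _; apply: eq_bigl => v; by rewrite andbC.
have eqD : \sum_(a in A) d a = \sum_t D t by rewrite (part_sum grp).
have hYW t : Yq t + Wq t = \sum_(v | grp v == t) y v.
  by rewrite [RHS](bigID (fun v => v \in A)) /= addrC.
have eqY : \sum_v y v = \sum_t (Yq t + Wq t).
  rewrite (part_sum grp); apply: eq_bigr => t _; rewrite hYW; by apply: eq_bigl.
have eqN : #|A|%:R = \sum_t n t by rewrite (card_cnt grp) natr_sum.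
have hgrp t : C t <= D t + mu * (Yq t + Wq t - n t).
  have [hl hu] := hA.2 t; rewrite -/(cnt grp A t) in hl hu.
  have hal := (hxt t); rewrite -/(cnt grp _ t) in hal.
  have hyt : alpha t <= Yq t + Wq t <= beta t by rewrite hYW ysum.
  move/andP: hyt => [hyl hyu].
  apply: (@group_ineq R (C t) (D t) (Yq t) (Wq t) mu K (n t) (full t) (good t)) => //.
  - by apply: sumr_ge0 => v _.
  - by apply: sumr_ge0 => v _.
  - by apply: sumr_ge0 => v _.
  - by apply: sumr_ge0 => v _.
  - rewrite /n; case: (cnt grp A t) => [|k]; [left|right] => //; by rewrite ler1n.
  - rewrite /C /Yq /D /n !mulr_suml; apply: ler_sum => v /andP[/eqP gv vA].
    rewrite -mulrA; apply: ler_wpM2l => //.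
    rewrite cntR; apply: ler_sum => a /andP[aA /eqP ga]; apply: B1 => //; by rewrite ga.
  - move=> nf; rewrite /C /Yq mulr_suml; apply: ler_sum => v /andP[/eqP gv vA].
    by apply: ler_wpM2l => //; apply: mu3 => //; rewrite gv.
  - move=> gt; split.
      rewrite /n ler1n; move: gt; rewrite /good.
      have := floor_ge0 (alpha t); rewrite alpha0 => hf.
      by move=> hlt; have := le_lt_trans hf hlt; rewrite ltz_nat.
    rewrite /n mulrC cntR /D; apply: ler_sum => a /andP[aA /eqP ga]; apply: mu2 => //.
    by rewrite ga.
  - move=> /eqP hf; apply: (le_trans hyu); apply: (le_trans (ceil_ge _)).
    by rewrite -hf natrZ.
  - rewrite /good -leNgt => hle; apply: le_trans hyl.
    apply: le_trans (floor_le _); rewrite /n -natrZ ler_int; exact: hle.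
  - rewrite /C /Yq mulr_suml; apply: ler_sum => v _; apply: ler_wpM2l => //.
    by rewrite /K (bigD1 v) //= lerDl sumr_ge0.
rewrite eqC eqD.
apply: (@le_trans _ _ (\sum_t (D t + mu * (Yq t + Wq t - n t)))); first exact: ler_sum.
rewrite big_split /= -mulr_sumr sumrB -eqY -eqN; lra.
Qed.


Lemma sub_card (B : {set V}) k : (k <= #|B|)%N -> exists T : {set V}, T \subset B /\ #|T| = k.
Proof.
elim: {B}#|B| {-2}B (erefl #|B|) k => [|n IH] B hB k hk.
  by exists B; split => //; rewrite hB; move: hk; rewrite hB leqn0 => /eqP ->.
case: (ltnP k n.+1) => hk'.
  case: (set_0Vmem B) => [B0|[v vB]]; first by rewrite B0 cards0 in hB.
  have hB' : #|B :\ v| = n by move: hB; rewrite (cardsD1 v B) vB add1n => -[].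
  have [T [sT cT]] := IH _ hB' k ltac:(by rewrite hB').
  exists T; split => //; apply: (fintype.subset_trans sT); exact: finset.subsetDl.
by exists B; split => //; apply/eqP; rewrite eqn_leq hk andbT hB.
Qed.

Lemma exists_feas x : P0_feasible grp alpha beta b x ->
  exists S, P2_feasible grp alpha beta b S.
Proof.
move=> [hx01 hxt hxs].
have x0 (S : {set V}) : (#|S| <= b)%N -> 0 <= x S by move=> /hx01 /andP[].
pose k t := `|Num.floor (alpha t)|%N.
have kZ t : (k t)%:Z = Num.floor (alpha t).
  by rewrite /k gez0_abs // floor_ge0.
have kR t : (k t)%:R <= alpha t by rewrite -natrZ kZ floor_le.
have hk1 t : (k t <= #|group_of grp t|)%N.
  rewrite -(ler_nat R); apply: (le_trans (kR t)).
  have /andP[h _] := hxt t; apply: (le_trans h).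
  apply: (@le_trans _ _ (\sum_(S : {set V} | (#|S| <= b)%N) x S * #|group_of grp t|%:R)).
    apply: ler_sum => S hS; apply: ler_wpM2l; first exact: x0.
    by rewrite ler_nat; apply: subset_leq_card; apply: finset.subsetIr.
  rewrite -mulr_suml; have := ler_wpM2r (ler0n R #|group_of grp t|) hxs; rewrite mul1r; exact.
have hk2 : (\sum_t k t <= b)%N.
  rewrite -(ler_nat R) natr_sum.
  apply: (@le_trans _ _ (\sum_t alpha t)); first exact: ler_sum.
  apply: (@le_trans _ _ (\sum_t \sum_(S : {set V} | (#|S| <= b)%N) x S * (cnt grp S t)%:R)).
    by apply: ler_sum => t _; have /andP[h _] := hxt t; exact: h.
  rewrite exchange_big /=.
  apply: (@le_trans _ _ (\sum_(S : {set V} | (#|S| <= b)%N) x S * b%:R)).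
    apply: ler_sum => S hS; rewrite -mulr_sumr; apply: ler_wpM2l; first exact: x0.
    by rewrite -natr_sum -card_cnt ler_nat.
  rewrite -mulr_suml; have := ler_wpM2r (ler0n R b) hxs; rewrite mul1r; exact.
have [T hT] := fin_all_exists (fun t => sub_card (hk1 t)).
pose S := [set v | v \in T (grp v)].
have cS t : cnt grp S t = k t.
  rewrite /cnt.
  have -> : S :&: group_of grp t = T t.
    apply/finset.setP => z; rewrite !inE.
    case: eqP => [<-|ne]; first by rewrite andbT.
    rewrite andbF; apply/esym/negP => zT.
    by have := fintype.subsetP (hT t).1 z zT; rewrite inE => /eqP.
  by rewrite (hT t).2.
exists S; split.
  by rewrite (card_cnt grp); under eq_bigr do rewrite cS.
move=> t; rewrite -/(cnt grp S t) cS kZ; split => //.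
have /andP[h1 h2] := hxt t.
rewrite -(ler_int R); apply: (le_trans (floor_le _)).
apply: (le_trans (le_trans h1 h2)); exact: ceil_ge.
Qed.

End Main.

Theorem lemma3 (R : realType) (V : finType) (m : nat)
  (f : {set V} -> R) (grp : V -> 'I_m) (alpha beta : 'I_m -> R) (b : nat)
  (OPT : R) :
  nonneg_fun f -> monotone_fun f -> submodular_fun f ->
  (forall t, 0 <= alpha t) -> (forall t, 0 <= beta t) -> (0 < b)%N ->
  P0_optimal_value f grp alpha beta b OPT ->
  [/\ exists S, P2_feasible grp alpha beta b S,
      forall A, P2_optimal f grp alpha beta b A ->
        (1 - (expR 1)^-1) ^+ 2 * OPT <= f A
    & exists A : {set V}, (#|A| <= b)%N /\
        (forall t : 'I_m,
          (Num.floor (alpha t) <= (#|A :&: group_of grp t|)%:Z)%R /\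
          ((#|A :&: group_of grp t|)%:Z <= Num.ceil (beta t))%R) /\
        (1 - (expR 1)^-1) ^+ 2 * OPT <= f A].
Proof.
move=> f0 fm fs a0 _ _ [[x [hx hobj]] _].
have [S0 hS0] := exists_feas a0 hx.
have part2 A : P2_optimal f grp alpha beta b A -> (1 - (expR 1)^-1) ^+ 2 * OPT <= f A.
  move=> hA; have := main_bound f0 fm fs a0 hx hA; rewrite hobj => h.
  have [c0 c1] := const_bound R.
  have fA0 := f0 A.
  set c := 1 - _ in c0 c1 *.
  have c20 : 0 <= c ^+ 2 by apply: exprn_ge0.
  apply: (@le_trans _ _ (c ^+ 2 * (2 * f A))); first exact: ler_wpM2l.
  nra.
have Pb : [pred X : {set V} | `[< P2_feasible grp alpha beta b X >]] S0.
  by rewrite /= asboolE.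
case: (arg_maxP f Pb) => A /= /asboolP hA hmax.
have optA : P2_optimal f grp alpha beta b A.
  by split => // S hS; apply: hmax; rewrite /= asboolE.
split.
- by exists S0.
- exact: part2.
- exists A; split; first exact: hA.1.
  split; first exact: hA.2.
  exact: part2.
Qed.
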